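(* For every $n\ge0$, the sequence $(W_0,W_1,\dots,W_n)$ of Whitney numbers of the second kind of $\Pi(n)$ is weakly increasing. Moreover, for $n\ge3$ it is strictly increasing.
   Context: $[n]_0=\{0,\dots,n\}$. A priority forest on $[n]_0$ is a rooted forest with vertex set $[n]_0$ whose component trees $T_0,T_1,\dots$ are increasing (each non-root vertex has a larger label than its parent) and satisfy: for $j<k$ every label of $T_j$ is smaller than every label of $T_k$. The priority lattice $\Pi(n)$ consists of the priority forests on $[n]_0$, ordered by inclusion of edge sets, together with an extra top element $\hat1$ of rank $n+1$; the rank of a priority forest is its number of edges. $W_k$ is the number of elements of $\Pi(n)$ of rank $k$. *)

(* Defs.v *)
From mathcomp Require Import all_boot.
Set Implicit Arguments. Unset Strict Implicit. Unset Printing Implicit Defensive.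

(* A rooted forest on [n]_0 = {0,...,n} (= 'I_n.+1) is encoded by its parent
   function: par v = Some u iff u is the parent of v (edge u -- v),
   par v = None iff v is a root. *)
Definition forest_fn (n : nat) := {ffun 'I_n.+1 -> option 'I_n.+1}.

Definition increasing_forest n (f : forest_fn n) : bool :=
  [forall v, if f v is Some u then u < v else true].

(* Root of the tree containing v: follow parents (n steps suffice when
   the forest is increasing). *)
Definition step n (f : forest_fn n) (x : 'I_n.+1) : 'I_n.+1 := odflt x (f x).
Definition root n (f : forest_fn n) (v : 'I_n.+1) : 'I_n.+1 := iter n (step f) v.

Definition same_tree n (f : forest_fn n) (x y : 'I_n.+1) : bool := root f x == root f y.

Definition priority_cond n (f : forest_fn n) : bool :=
  [forall u, forall v, ~~ same_tree f u v ==>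
     ([forall x, forall y, same_tree f x u && same_tree f y v ==> (x < y)] ||
      [forall x, forall y, same_tree f x u && same_tree f y v ==> (y < x)])].

Definition priority_forest n (f : forest_fn n) : bool :=
  increasing_forest f && priority_cond f.

Definition nedges n (f : forest_fn n) : nat := #|[set v | f v != None]|.

(* Whitney numbers of the second kind of the priority lattice Pi(n):
   priority forests of rank k, plus the extra top element (rank n+1). *)
Definition W (n k : nat) : nat :=
  (k == n.+1) + #|[set f : forest_fn n | priority_forest f && (nedges f == k)]|.

(* Main.v *)
Require Import Defs.
From mathcomp Require Import all_boot.
From mathcomp Require Import zify.
Set Implicit Arguments. Unset Strict Implicit. Unset Printing Implicit Defensive.

Definition localc n (f : forest_fn n) : bool :=
  [forall w, forall v, (f v == None) ==>
     (if f w is Some u then ~~ ((u < v) && (v < w)) else true)].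

Lemma localP n (f : forest_fn n) (v w u : 'I_n.+1) :
  localc f -> f v = None -> f w = Some u -> u < v -> v < w -> False.
Proof.
move=> L ev ew uv vw.
have := implyP (forallP (forallP L w) v); rewrite ev ew eqxx uv vw.
by move=> /(_ isT).
Qed.

Lemma inc0 n (f : forest_fn n) : increasing_forest f -> f ord0 = None.
Proof. by move/forallP/(_ ord0); case: (f ord0). Qed.

Lemma incP n (f : forest_fn n) (v u : 'I_n.+1) : increasing_forest f -> f v = Some u -> u < v.
Proof. by move=> H e; move/forallP/(_ v): H; rewrite e. Qed.

Lemma step_le n (f : forest_fn n) (x : 'I_n.+1) : increasing_forest f -> step f x <= x.
Proof.
move=> H; rewrite /step; case e: (f x) => [u|] //=.
by apply: ltnW; apply: incP e.
Qed.

Lemma iter_le n (f : forest_fn n) m (x : 'I_n.+1) : increasing_forest f -> iter m (step f) x <= x.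
Proof.
move=> H; elim: m => //= m IH; exact: leq_trans (step_le _ H) IH.
Qed.

Lemma iter_root n (f : forest_fn n) m (x : 'I_n.+1) : increasing_forest f ->
  f (iter m (step f) x) = None \/ iter m (step f) x + m <= x.
Proof.
move=> H; elim: m => [|m IH]; first by right; rewrite addn0.
rewrite iterS; case e: (f (iter m (step f) x)) => [u|].
- case: IH => [|IH]; first by rewrite e.
  rewrite /step e /=; case e2: (f u) => [u'|]; [right | by left].
  have := incP H e; lia.
- by left; rewrite /step e.
Qed.

Lemma root_none n (f : forest_fn n) (x : 'I_n.+1) : increasing_forest f -> f (Defs.root f x) = None.
Proof.
move=> H; case: (iter_root n x H) => // h.
have -> : Defs.root f x = ord0.
  apply/val_inj => /=; rewrite /Defs.root; have := ltn_ord x; lia.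
exact: inc0.
Qed.

Lemma root_le n (f : forest_fn n) (x : 'I_n.+1) : increasing_forest f -> Defs.root f x <= x.
Proof. exact: iter_le. Qed.

Lemma step_fix n (f : forest_fn n) (y : 'I_n.+1) : f y = None -> step f y = y.
Proof. by rewrite /step => ->. Qed.

Lemma root_step n (f : forest_fn n) (x : 'I_n.+1) : increasing_forest f ->
  Defs.root f (step f x) = Defs.root f x.
Proof.
move=> H; rewrite /Defs.root -iterSr iterS step_fix //; exact: root_none.
Qed.

Lemma root_some n (f : forest_fn n) (x u : 'I_n.+1) : increasing_forest f ->
  f x = Some u -> Defs.root f x = Defs.root f u.
Proof. by move=> H e; rewrite -(root_step x H) /step e. Qed.

Lemma root_self n (f : forest_fn n) (x : 'I_n.+1) : f x = None -> Defs.root f x = x.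
Proof.
move=> e; rewrite /Defs.root.
have h : forall m, iter m (step f) x = x by elim=> //= m IH; rewrite IH step_fix.
exact: h.
Qed.

Lemma key n (f : forest_fn n) : increasing_forest f -> localc f ->
  forall m (x : 'I_n.+1), x < m -> forall r, f r = None -> Defs.root f x < r -> r <= x -> False.
Proof.
move=> H L; elim=> // m IH x ltxm r er lt le.
case ex: (f x) => [u|].
- rewrite (root_some H ex) in lt; have ux := incP H ex.
  case: (leqP r u) => [ru|ur].
  + by apply: (IH u _ r er lt ru); lia.
  + case: (ltngtP r x) => [rx|xr|rx].
    * exact: (localP L er ex ur rx).
    * lia.
    * by move: er; rewrite (val_inj rx) ex.
- rewrite root_self // in lt; lia.
Qed.

Lemma root_lt n (f : forest_fn n) (x y : 'I_n.+1) : increasing_forest f -> localc f ->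
  Defs.root f x < Defs.root f y -> x < y.
Proof.
move=> H L lt; rewrite ltnNge; apply/negP => yx.
apply: (key H L (m := x.+1) (x := x) _ (root_none y H) lt) => //.
exact: leq_trans (root_le y H) yx.
Qed.

Lemma prioE n (f : forest_fn n) : increasing_forest f -> priority_cond f = localc f.
Proof.
move=> H; apply/idP/idP.
- move=> P; apply/forallP => w; apply/forallP => v; apply/implyP => /eqP ev.
  case ew: (f w) => [u|] //; apply/negP => /andP [uv vw].
  have nst : ~~ same_tree f u v.
    rewrite /same_tree (root_self ev); apply/eqP => e.
    have := root_le u H; rewrite e; lia.
  have /forallP/(_ u)/forallP/(_ v) := P.
  rewrite nst /= => /orP [/forallP/(_ w)/forallP/(_ v)
                         | /forallP/(_ u)/forallP/(_ v)].
  + rewrite /same_tree (root_some H ew) !eqxx /=; lia.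
  + rewrite /same_tree !eqxx /=; lia.
- move=> L; apply/forallP => u; apply/forallP => v; apply/implyP => nst.
  rewrite /same_tree in nst.
  case: (ltngtP (Defs.root f u) (Defs.root f v)) => [lt|gt|eq].
  + apply/orP; left; apply/forallP=> x; apply/forallP=> y.
    apply/implyP => /andP [/eqP ex /eqP ey]; apply: root_lt H L _.
    by rewrite ex ey.
  + apply/orP; right; apply/forallP=> x; apply/forallP=> y.
    apply/implyP => /andP [/eqP ex /eqP ey]; apply: root_lt H L _.
    by rewrite ex ey.
  + by rewrite (val_inj eq) eqxx in nst.
Qed.

Definition minroot n (f : forest_fn n) (r : 'I_n.+1) : bool :=
  [&& 0 < r, f r == None &
   [forall r' : 'I_n.+1, ((0 < r') && (f r' == None)) ==> (r <= r')]].

Definition upd n (f : forest_fn n) (r : 'I_n.+1) : forest_fn n :=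
  [ffun v => if v == r then Some ord0 else f v].

Definition phi n (f : forest_fn n) : forest_fn n :=
  if [pick r | minroot f r] is Some r then upd f r else f.

Lemma minroot_uniq n (f : forest_fn n) (r r' : 'I_n.+1) : minroot f r -> minroot f r' -> r = r'.
Proof.
move=> /and3P [p1 e1 /forallP m1] /and3P [p2 e2 /forallP m2].
apply/val_inj/eqP; rewrite eqn_leq.
by rewrite (implyP (m1 r')) ?p2 ?e2 // (implyP (m2 r)) ?p1 ?e1.
Qed.

Lemma phiE n (f : forest_fn n) (r : 'I_n.+1) : minroot f r -> phi f = upd f r.
Proof.
move=> m; rewrite /phi; case: pickP => [r' m'|/(_ r)]; last by rewrite m.
by rewrite (minroot_uniq m' m).
Qed.

Lemma exists_minroot n (f : forest_fn n) : increasing_forest f -> nedges f < n ->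
  exists r, minroot f r.
Proof.
move=> H ne.
case: (pickP [pred r : 'I_n.+1 | (0 < r) && (f r == None)]) => [r0 Hr0 | none].
- case: (arg_minnP (fun r : 'I_n.+1 => val r) Hr0) => r Pr minr.
  exists r; move: Pr => /= /andP [p e]; rewrite /minroot p e /=.
  by apply/forallP => r'; apply/implyP => /minr.
- exfalso.
  set E := [set v | f v != None].
  have sub : ~: E \subset [set ord0].
    apply/subsetP => v; rewrite !inE negbK => ev.
    have := none v; rewrite /= ev andbT => h.
    by apply/eqP/val_inj => /=; move: h; case: (nat_of_ord v).
  have := subset_leq_card sub; rewrite cards1.
  have := cardsC E; rewrite card_ord.
  move: ne; rewrite /nedges -/E; lia.
Qed.

Lemma upd_other n (f : forest_fn n) (r w : 'I_n.+1) : w != r -> upd f r w = f w.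
Proof. by rewrite ffunE => /negbTE ->. Qed.

Lemma upd_inc n (f : forest_fn n) (r : 'I_n.+1) : increasing_forest f -> 0 < r ->
  increasing_forest (upd f r).
Proof.
move=> H p; apply/forallP => v; rewrite ffunE.
case: (v =P r) => [->|_] //; exact: (forallP H v).
Qed.

Lemma upd_local n (f : forest_fn n) (r : 'I_n.+1) : localc f -> minroot f r -> localc (upd f r).
Proof.
move=> L /and3P [p e /forallP m].
apply/forallP => w; apply/forallP => v; rewrite !ffunE.
case: (v =P r) => [->|vr] //=.
case: (w =P r) => [->|wr].
- apply/implyP => ev; apply/negP => /andP [v0 vlt].
  have := implyP (m v); rewrite v0 ev => /(_ isT); lia.
- exact: (forallP (forallP L w) v).
Qed.

Lemma upd_nedges n (f : forest_fn n) (r : 'I_n.+1) : f r = None -> nedges (upd f r) = (nedges f).+1.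
Proof.
move=> e; rewrite /nedges.
have -> : [set v | upd f r v != None] = r |: [set v | f v != None].
  apply/setP => v; rewrite !inE ffunE; by case: (v =P r).
by rewrite cardsU1 inE e.
Qed.

Lemma upd_inj_aux n (f1 f2 : forest_fn n) (r1 r2 : 'I_n.+1) : localc f1 -> minroot f1 r1 ->
  minroot f2 r2 -> upd f1 r1 = upd f2 r2 -> ~ (r1 < r2).
Proof.
move=> L1 /and3P [p1 /eqP e1 _] /and3P [p2 e2 _] E lt.
have := congr1 (fun g : forest_fn n => g r2) E; rewrite /= !ffunE eqxx.
case: (r2 =P r1) => [e|_]; first by rewrite e ltnn in lt.
move=> h; exact: (localP L1 e1 h p1 lt).
Qed.

Lemma upd_inj n (f1 f2 : forest_fn n) (r1 r2 : 'I_n.+1) : localc f1 -> localc f2 ->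
  minroot f1 r1 -> minroot f2 r2 -> upd f1 r1 = upd f2 r2 -> f1 = f2.
Proof.
move=> L1 L2 m1 m2 E.
have er : r1 = r2.
  apply/val_inj; case: (ltngtP r1 r2) => // lt.
  - by case: (upd_inj_aux L1 m1 m2 E lt).
  - by case: (upd_inj_aux L2 m2 m1 (esym E) lt).
subst r2; apply/ffunP => v.
have := congr1 (fun g : forest_fn n => g v) E; rewrite /= !ffunE.
case: (v =P r1) => [->|_] // _.
by move: m1 m2 => /and3P [_ /eqP -> _] /and3P [_ /eqP -> _].
Qed.

Definition A n k := [set f : forest_fn n | priority_forest f && (nedges f == k)].

Lemma inA n k (f : forest_fn n) :
  f \in A n k -> [/\ increasing_forest f, localc f & nedges f = k].
Proof.
rewrite inE => /andP [/andP [H P] /eqP e]; split => //; by rewrite -prioE.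
Qed.

Lemma inA' n k (f : forest_fn n) :
  increasing_forest f -> localc f -> nedges f = k -> f \in A n k.
Proof. by move=> H L e; rewrite inE /priority_forest H prioE // L e eqxx. Qed.

Lemma phi_in n k (f : forest_fn n) : k < n -> f \in A n k -> phi f \in A n k.+1.
Proof.
move=> kn /inA [H L e].
have [r m] : exists r, minroot f r by apply: exists_minroot H _; rewrite e.
rewrite (phiE m); move: (m) => /and3P [p /eqP fr _].
apply: inA'; [exact: upd_inc | exact: upd_local | by rewrite upd_nedges // e].
Qed.

Lemma phi_inj n k : k < n -> {in A n k &, injective (@phi n)}.
Proof.
move=> kn f1 f2 /inA [H1 L1 e1] /inA [H2 L2 e2].
have [r1 m1] : exists r, minroot f1 r by apply: exists_minroot H1 _; rewrite e1.
have [r2 m2] : exists r, minroot f2 r by apply: exists_minroot H2 _; rewrite e2.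
rewrite (phiE m1) (phiE m2); exact: upd_inj.
Qed.

Lemma card_interval N a b : a <= b -> b <= N ->
  #|[set v : 'I_N | a <= v < b]| = b - a.
Proof.
move=> ab bN; rewrite -sum1_card.
rewrite (eq_bigl (fun v : 'I_N => a <= v < b)); last by move=> v; rewrite inE.
rewrite -(big_mkord (fun i => a <= i < b) (fun _ => 1)) sum1_count /index_iota subn0.
rewrite (_ : N = a + (b - a) + (N - b)); last by lia.
rewrite !iotaD !count_cat.
rewrite (@eq_in_count _ _ pred0 (iota 0 a)); last first.
  move=> i; rewrite mem_iota => /andP [_ h].
  have -> : (a <= i) = false by apply/negbTE; rewrite -ltnNge; lia.
  by [].
rewrite (@eq_in_count _ _ predT (iota (0 + a) (b - a))); last first.
  by move=> i; rewrite mem_iota => /andP [h1 h2]; apply/andP; split; lia.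
rewrite (@eq_in_count _ _ pred0 (iota (0 + (a + (b - a))) (N - b))); last first.
  move=> i; rewrite mem_iota => /andP [h _].
  have -> : (i < b) = false by apply/negbTE; rewrite -leqNgt; lia.
  by rewrite andbF.
rewrite !count_pred0 count_predT size_iota; lia.
Qed.

Definition hA n k : forest_fn n :=
  [ffun v : 'I_n.+1 => if (2 <= v) && (v <= k.+2) then Some (inord 1) else None].

Lemma hA_in n k : k.+2 <= n -> hA n k \in A n k.+1.
Proof.
move=> kn; apply: inA'.
- apply/forallP => v; rewrite ffunE; case: ifP => // /andP [h2 _].
  rewrite inordK //; lia.
- apply/forallP => w; apply/forallP => v; rewrite !ffunE.
  case: ifP => [_|hv] //=; case: ifP => [/andP [hw1 hw2]|] //=.
  rewrite inordK; last by lia.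
  apply/negP => /andP [a b]; move/negbT: hv; rewrite negb_and -!ltnNge.
  case/orP; lia.
- rewrite /nedges.
  have -> : [set v | hA n k v != None] = [set v : 'I_n.+1 | 2 <= v < k.+3].
    apply/setP => v; rewrite !inE ffunE; by case: ifP.
  rewrite card_interval //; lia.
Qed.

Lemma hA_notin n k : k < n -> hA n k \notin [set phi f | f in A n k].
Proof.
move=> kn; apply/imsetP => [[f fA e]].
have [H L ne] := inA fA.
have [r m] : exists r, minroot f r by apply: exists_minroot H _; rewrite ne.
rewrite (phiE m) in e.
have := congr1 (fun g : forest_fn n => g r) e; rewrite /= !ffunE eqxx.
case: ifP => // _ [] /(congr1 val); rewrite /= inordK //; lia.
Qed.

Definition hB n : forest_fn n :=
  [ffun v : 'I_n.+1 => if (v : nat) == 0 then None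
                       else if v <= 2 then Some ord0 else Some (inord 1)].

Lemma hB_in n k : 1 <= n -> k.+1 = n -> hB n \in A n k.+1.
Proof.
move=> n1 kn; apply: inA'.
- apply/forallP => v; rewrite ffunE; case: ifP => // /negbT; rewrite -lt0n => v0.
  case: ifP => h /=; first lia.
  move/negbT: h; rewrite -ltnNge => h; rewrite inordK; lia.
- apply/forallP => w; apply/forallP => v; rewrite !ffunE.
  case: ifP => [/eqP v0|]; last by case: ifP.
  rewrite v0 /=; case: ifP => // _; case: ifP => _ //=; by rewrite ltn0.
- rewrite /nedges.
  have -> : [set v | hB n v != None] = [set v : 'I_n.+1 | 1 <= v < n.+1].
    apply/setP => v; rewrite !inE ffunE ltn_ord andbT lt0n.
    by case: ifP => //= _; case: ifP.
  rewrite card_interval //; lia.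
Qed.

Lemma hB_notin n k : 3 <= n -> k.+1 = n -> hB n \notin [set phi f | f in A n k].
Proof.
move=> n3 kn; apply/imsetP => [[f fA e]].
have [H L ne] := inA fA.
have [r m] : exists r, minroot f r by apply: exists_minroot H _; rewrite ne; lia.
rewrite (phiE m) in e.
move: (m) => /and3P [p /eqP fr _].
have := congr1 (fun g : forest_fn n => g r) e; rewrite /= !ffunE eqxx.
case: ifP => // r0; case: ifP => r2; last first.
  case=> /(congr1 val); rewrite /= inordK //; lia.
move=> _.
have wv : nat_of_ord (inord r.+1 : 'I_n.+1) = r.+1 by rewrite inordK //; lia.
have fw : f (inord r.+1) = hB n (inord r.+1).
  rewrite e upd_other //; apply/eqP => /(congr1 (@nat_of_ord _)); rewrite wv; lia.
move: fw; rewrite ffunE wv /=; case: ifP => h fw.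
- by apply: (localP L fr fw) => //; rewrite wv.
- apply: (localP L fr fw); last by rewrite wv.
  rewrite inordK; lia.
Qed.

Theorem lemma5p1 (n : nat) :
  (forall k, k < n -> W n k <= W n k.+1) /\
  (3 <= n -> forall k, k < n -> W n k < W n k.+1).
Proof.
have E : forall k, k < n -> W n k = #|A n k| /\ W n k.+1 = #|A n k.+1|.
  move=> k kn; rewrite /W.
  have -> : (k == n.+1) = false by apply/negbTE/eqP; lia.
  have -> : (k.+1 == n.+1) = false by apply/negbTE/eqP; lia.
  by [].
have sub : forall k, k < n -> [set phi f | f in A n k] \subset A n k.+1.
  move=> k kn; apply/subsetP => g /imsetP [f fA ->]; exact: phi_in.
split.
- move=> k kn; have [-> ->] := E k kn.
  rewrite -(card_in_imset (phi_inj kn)); exact: subset_leq_card (sub k kn).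
- move=> n3 k kn; have [-> ->] := E k kn.
  rewrite -(card_in_imset (phi_inj kn)); apply: proper_card.
  apply/properP; split; first exact: sub.
  case: (ltnP k.+1 n) => [lt|ge].
  + exists (hA n k); [exact: hA_in | exact: hA_notin].
  + exists (hB n); [apply: hB_in; lia | apply: hB_notin; lia].
Qed.
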